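(* Let $X$ and $Y$ be nonempty totally bounded metric spaces. Then $d^{us}_{GH}(X,Y)=d_{GH}(X,Y)$.
   Context: For a metric space, $|xy|$ denotes distance. A set-valued map $f:X\rightrightarrows Y$ assigns to each $x\in X$ a nonempty $f(x)\subseteq Y$ and is identified with its graph. A correspondence between $X$ and $Y$ is a subset $R\subseteq X\times Y$ whose projections to $X$ and to $Y$ are both surjective, regarded as the set-valued map $x\mapsto R(x)=\{y:(x,y)\in R\}$; $R^{-1}=\{(y,x):(x,y)\in R\}$; $\mathcal R(X,Y)$ is the set of all correspondences. The distortion of a nonempty $\sigma\subseteq X\times Y$ is $\operatorname{dis}\sigma=\sup\{||xx'|-|yy'||:(x,y),(x',y')\in\sigma\}\in[0,\infty]$, and $d_{GH}(X,Y)=\frac12\inf\{\operatorname{dis}R:R\in\mathcal R(X,Y)\}$. A set-valued map $f$ is upper semicontinuous if for every $x$ and every open $U\supseteq f(x)$ there is a neighborhood $V$ of $x$ with $f(x')\subseteq U$ for all $x'\in V$. $\mathcal R_{us}(X,Y)$ is the set of $R\in\mathcal R(X,Y)$ with both $R$ and $R^{-1}$ upper semicontinuous, and $d^{us}_{GH}(X,Y)=\frac12\inf\{\operatorname{dis}R:R\in\mathcal R_{us}(X,Y)\}$. *)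

(* Defs.v *)
From HB Require Import structures.
From mathcomp Require Import all_boot all_order all_algebra.
From mathcomp Require Import all_classical all_reals ereal.
Set Implicit Arguments. Unset Strict Implicit. Unset Printing Implicit Defensive.
Import Order.TTheory GRing.Theory Num.Theory.
Local Open Scope classical_set_scope.
Local Open Scope ring_scope.

Definition is_metric (R : realType) (X : Type) (d : X -> X -> R) : Prop :=
  (forall x y, 0 <= d x y) /\
  (forall x y, d x y = 0 <-> x = y) /\
  (forall x y, d x y = d y x) /\
  (forall x y z, d x z <= d x y + d y z).

Definition mopen (R : realType) (X : Type) (d : X -> X -> R) (U : set X) : Prop :=
  forall x, U x -> exists2 r : R, 0 < r & forall x', d x x' < r -> U x'.

Definition totally_bounded (R : realType) (X : Type) (d : X -> X -> R) : Prop :=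
  forall eps : R, 0 < eps ->
    exists2 A : set X, finite_set A & forall x, exists2 a, A a & d a x < eps.

Definition correspondence (X Y : Type) (C : set (X * Y)) : Prop :=
  (forall x, exists y, C (x, y)) /\ (forall y, exists x, C (x, y)).

Definition image_of (X Y : Type) (C : set (X * Y)) (x : X) : set Y :=
  [set y | C (x, y)].

Definition inverse_rel (X Y : Type) (C : set (X * Y)) : set (Y * X) :=
  [set p | C (p.2, p.1)].

Definition usc (R : realType) (X Y : Type) (dX : X -> X -> R) (dY : Y -> Y -> R)
    (C : set (X * Y)) : Prop :=
  forall x (U : set Y), mopen dY U -> image_of C x `<=` U ->
    exists2 r : R, 0 < r & forall x', dX x x' < r -> image_of C x' `<=` U.

Definition distortion (R : realType) (X Y : Type) (dX : X -> X -> R) (dY : Y -> Y -> R)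
    (s : set (X * Y)) : \bar R :=
  ereal_sup [set (`| dX p.1 q.1 - dY p.2 q.2 |)%:E | p in s & q in s].

Definition dGH (R : realType) (X Y : Type) (dX : X -> X -> R) (dY : Y -> Y -> R) : \bar R :=
  ((2 : R)^-1)%:E * ereal_inf [set distortion dX dY C | C in correspondence (X:=X) (Y:=Y)].

Definition correspondence_us (R : realType) (X Y : Type) (dX : X -> X -> R)
    (dY : Y -> Y -> R) (C : set (X * Y)) : Prop :=
  correspondence C /\ usc dX dY C /\ usc dY dX (inverse_rel C).

Definition dGH_us (R : realType) (X Y : Type) (dX : X -> X -> R) (dY : Y -> Y -> R) : \bar R :=
  ((2 : R)^-1)%:E * ereal_inf [set distortion dX dY C | C in correspondence_us dX dY].

(* Main.v *)
Require Import Defs.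
From mathcomp Require Import all_boot all_order all_algebra.
From mathcomp Require Import all_classical all_reals ereal.
From mathcomp Require Import lra.
Import Order.TTheory GRing.Theory Num.Theory.
Local Open Scope classical_set_scope.
Local Open Scope ring_scope.

Lemma posmin (R : realType) (s : seq R) :
  (forall x, x \in s -> 0 < x) -> exists2 r : R, 0 < r & forall x, x \in s -> r <= x.
Proof.
elim: s => [|a s IH] H.
  by exists 1 => // x; rewrite in_nil.
have [r r0 Hr] : exists2 r : R, 0 < r & forall x, x \in s -> r <= x.
  by apply: IH => x xs; apply: H; rewrite in_cons xs orbT.
have a0 : 0 < a by apply: H; rewrite in_cons eqxx.
case: (lerP a r) => ar.
  exists a => // x; rewrite in_cons => /orP [/eqP ->|xs] //.
  by apply: le_trans ar (Hr x xs).
exists r => // x; rewrite in_cons => /orP [/eqP ->|xs]; last exact: Hr.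
exact: ltW.
Qed.

Lemma finmin (R : realType) (X : Type) (A : set X) (f : X -> R) :
  finite_set A -> exists2 r : R, 0 < r & forall a, A a -> 0 < f a -> r <= f a.
Proof.
move=> finA.
have finS : finite_set [set f a | a in A `&` [set a | 0 < f a]].
  by apply: finite_image; apply: finite_setI; left.
have [s Hs] := (finite_seqP _).1 finS.
case: (@posmin R s) => [x xs|r r0 Hr].
  have : [set` s] x by [].
  by rewrite -Hs => -[a [_ /= pa] <-].
exists r => // a Aa pa; apply: Hr.
have : [set` s] (f a) by rewrite -Hs; exists a.
by [].
Qed.

Lemma usc_gen (R : realType) (X Y : Type) (dX : X -> X -> R) (dY : Y -> Y -> R)
  (hX : is_metric dX) (A : set X) (finA : finite_set A) (e : R) (P : X -> Y -> Prop) :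
  usc dX dY [set p | exists2 a, A a & dX p.1 a <= e /\ P a p.2].
Proof.
move: hX => [d0 [dxx [dsym dtri]]].
move=> x U _ HU.
have [r r0 Hr] := @finmin R X A (fun a => dX x a - e) finA.
exists r => // x' dx' y /= [a Aa [da Pa]].
apply: HU; exists a => //; split => //.
case: (lerP (dX x a) e) => // hlt.
have := Hr a Aa; rewrite subr_gt0 => /(_ hlt) hr.
have := dtri x x' a; lra.
Qed.

Lemma dist4 (R : realType) (X : Type) (d : X -> X -> R) (h : is_metric d)
  (x x' x0 x0' a a' : X) (e : R) :
  d x a <= e -> d x0 a < e -> d x' a' <= e -> d x0' a' < e ->
  d x x' <= d x0 x0' + 4 * e /\ d x0 x0' <= d x x' + 4 * e.
Proof.
move: h => [d0 [dxx [dsym dtri]]] h1 h2 h3 h4.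
have := dtri x a x0; have := dtri x0 a x; have := dtri x' a' x0'; have := dtri x0' a' x'.
have := dtri x x0 x'; have := dtri x0 x0' x'; have := dtri x0 x x0'; have := dtri x x' x0'.
rewrite (dsym a x0) (dsym a x) (dsym a' x0') (dsym a' x') (dsym x' x0') (dsym x0 x).
lra.
Qed.

Lemma approx (R : realType) (X Y : Type) (dX : X -> X -> R) (dY : Y -> Y -> R)
  (hX : is_metric dX) (hY : is_metric dY)
  (tbX : totally_bounded dX) (tbY : totally_bounded dY) (C : set (X * Y))
  (hC : correspondence C) (e : R) (e0 : 0 < e) :
  exists2 C', correspondence_us dX dY C' &
     (distortion dX dY C' <= distortion dX dY C + (8 * e)%:E)%E.
Proof.
have [A finA HA] := tbX e e0.
have [B finB HB] := tbY e e0.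
pose D a b := exists x0 y0, C (x0, y0) /\ dX x0 a < e /\ dY y0 b < e.
pose C' := [set p : X * Y | exists2 a, A a & dX p.1 a <= e /\
              (exists2 b, B b & dY p.2 b <= e /\ D a b)].
have hX' := hX; have hY' := hY.
move: hX' hY' => [dX0 [dXx [dXs dXt]]] [dY0 [dYx [dYs dYt]]].
have dXaa : forall a, dX a a = 0 by move=> a; exact: (dXx a a).2.
have dYaa : forall a, dY a a = 0 by move=> a; exact: (dYx a a).2.
exists C'.
  split; [split|split].
  - move=> x.
    have [a Aa da] := HA x.
    have [y0 Cy0] := hC.1 a.
    have [b Bb db] := HB y0.
    exists b; exists a => //; split; first by rewrite dXs ltW.
    exists b => //; split; first by rewrite dYaa ltW.
    by exists a, y0; rewrite dXaa dYs.
  - move=> y.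
    have [b Bb db] := HB y.
    have [x0 Cx0] := hC.2 b.
    have [a Aa da] := HA x0.
    exists a; exists a => //; split; first by rewrite dXaa ltW.
    exists b => //; split; first by rewrite dYs ltW.
    by exists x0, b; rewrite dYaa dXs.
  - exact: (@usc_gen R X Y dX dY hX A finA e (fun a y => exists2 b, B b & dY y b <= e /\ D a b)).
  have -> : inverse_rel C' = [set q : Y * X | exists2 b, B b & dY q.1 b <= e /\
              (exists2 a, A a & dX q.2 a <= e /\ D a b)].
    apply/seteqP; split => -[y x] /=.
      by move=> [a Aa [da [b Bb [db Dab]]]]; exists b => //; split => //; exists a.
    by move=> [b Bb [db [a Aa [da Dab]]]]; exists a => //; split => //; exists b.
  exact: (@usc_gen R Y X dY dX hY B finB e (fun b x => exists2 a, A a & dX x a <= e /\ D a b)).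
apply: ge_ereal_sup => z [[x y] [a Aa [/= da [b Bb [db [x0 [y0 [C0 [d0a d0b]]]]]]]]].
move=> [[x' y'] [a' Aa' [/= da' [b' Bb' [db' [x0' [y0' [C0' [d0a' d0b']]]]]]]]] <- /=.
have [h1 h2] := @dist4 R X dX hX _ _ _ _ _ _ _ da d0a da' d0a'.
have [h3 h4] := @dist4 R Y dY hY _ _ _ _ _ _ _ db d0b db' d0b'.
have hsup : ((`| dX x0 x0' - dY y0 y0' |)%:E <= distortion dX dY C)%E.
  apply: ereal_sup_ubound.
  by exists (x0, y0) => //; exists (x0', y0').
apply: le_trans (leeD2r _ hsup).
rewrite -EFinD lee_fin.
have := ler_norm (dX x0 x0' - dY y0 y0').
have := ler_norm (- (dX x0 x0' - dY y0 y0')); rewrite normrN.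
rewrite ler_norml => n1 n2; apply/andP; split; lra.
Qed.

Theorem mainTheorem8 (R : realType) (X Y : Type) (dX : X -> X -> R) (dY : Y -> Y -> R)
  (hX : is_metric dX) (hY : is_metric dY) (neX : inhabited X) (neY : inhabited Y)
  (tbX : totally_bounded dX) (tbY : totally_bounded dY) :
  dGH_us dX dY = dGH dX dY.
Proof.
rewrite /dGH_us /dGH; congr (_ * _)%E.
apply/eqP; rewrite eq_le; apply/andP; split.
- apply: le_ereal_inf_tmp => z [C hC <-].
  apply/lee_addgt0Pr => e e0.
  have e80 : 0 < e / 8 by rewrite divr_gt0.
  have [C' hC' hd] := @approx R X Y dX dY hX hY tbX tbY C hC (e / 8) e80.
  have h8 : 8 * (e / 8) = e by rewrite mulrC divfK.
  rewrite h8 in hd.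
  apply: le_trans hd.
  by apply: ereal_inf_lbound; exists C'.
- apply: ereal_inf_le_tmp => z [C [hC _] <-].
  by exists C.
Qed.
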